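(* Let $k \geq \ell \geq 2$, $k \geq 3$ and $n > k+\ell$. Then $g(n,k,\ell) < h(n,k,\ell)$, where $$g(n,k,\ell) = \sum_{2 \leq i \leq \ell+1} \binom{\ell+1}{i}\binom{n-\ell-1}{k-i} + \binom{\ell+1}{\ell},\qquad h(n,k,\ell) = \binom{n}{k} - 2\binom{n-\ell}{k} + \binom{n-2\ell}{k} + 2.$$
   Context: Binomial coefficients $\binom{a}{b}$ are $0$ when $b<0$ or $b>a$. *)

(* Defs.v *)
From mathcomp Require Import all_boot all_order all_algebra.
Set Implicit Arguments. Unset Strict Implicit. Unset Printing Implicit Defensive.
Import GRing.Theory Num.Theory.
Local Open Scope ring_scope.

(* Binomial coefficient C(a, b) with a natural top index and integer bottom
   index, equal to 0 when b < 0 (and, via 'C, when b > a). *)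
Definition binz (a : nat) (b : int) : int :=
  match b with
  | Posz m => ('C(a, m))%:Z
  | Negz _ => 0
  end.

Definition g_fun (n k l : nat) : int :=
  \sum_(2 <= i < l.+2) ('C(l.+1, i))%:Z * binz (n - l.+1)%N (k%:Z - i%:Z)
  + ('C(l.+1, l))%:Z.

Definition h_fun (n k l : nat) : int :=
  ('C(n, k))%:Z - 2 * ('C(n - l, k))%:Z + ('C(n - 2 * l, k))%:Z + 2.

(* Main.v *)
Require Import Defs.
From mathcomp Require Import all_boot all_order all_algebra.
From mathcomp Require Import zify.
Import GRing.Theory Num.Theory.
Local Open Scope ring_scope.

Lemma sum_ext0 a b (F : nat -> nat) : (a <= b)%N ->
  (forall i, (a <= i < b)%N -> F i = 0%N) ->
  (\sum_(0 <= i < a) F i)%N = (\sum_(0 <= i < b) F i)%N.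
Proof.
move=> ab H; rewrite (@big_cat_nat _ _ _ a 0 b) //=.
rewrite [X in (_ + X)%N]big1_seq ?addn0 // => i /andP[_].
rewrite mem_index_iota; exact: H.
Qed.

Lemma hock a b j : (j <= a)%N ->
  ('C(a.+1, b.+1) <= 'C(a.+1 - j, b.+1) + j * 'C(a, b))%N.
Proof.
elim: j => [|j IH] ja; first by rewrite subn0 mul0n addn0.
have := IH (ltnW ja).
have -> : (a.+1 - j = (a - j).+1)%N by lia.
have := binS (a - j) b.
have := leq_bin2l b (leq_subr j a).
have -> : (a.+1 - j.+1 = a - j)%N by lia.
nia.
Qed.

Lemma bin_ge2 a b : (0 < b)%N -> (b < a)%N -> (2 <= 'C(a, b))%N.
Proof.
case: a => // a; case: b => // b hb hba.
rewrite binS.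
have h1 : (0 < 'C(a, b.+1))%N by rewrite bin_gt0.
have h2 : (0 < 'C(a, b))%N by rewrite bin_gt0; lia.
lia.
Qed.

Lemma binzE m k i : binz m (k%:Z - i%:Z) = (((i <= k)%N * 'C(m, k - i))%N)%:Z.
Proof.
case: (leqP i k) => hik.
  by rewrite subzn // mul1n.
rewrite mul0n.
have : k%:Z - i%:Z < 0 by rewrite subr_lt0 ltz_nat.
by case: (k%:Z - i%:Z).
Qed.

Theorem proposition4p2 (n k l : nat) :
  (2 <= l)%N -> (l <= k)%N -> (3 <= k)%N -> (k + l < n)%N ->
  g_fun n k l < h_fun n k l.
Proof.
move=> hl hlk hk hn.
have [m Em] : exists m, n = (l.+1 + m)%N by exists (n - l.+1)%N; lia.
have hm : (k <= m)%N by lia.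
subst n.
pose F i := ('C(l.+1, i) * ((i <= k)%N * 'C(m, k - i)))%N.
have Eg : g_fun (l.+1 + m) k l = (\sum_(2 <= i < l.+2) F i + l.+1)%N%:Z.
  rewrite /g_fun PoszD binSn; congr (_ + _).
  rewrite -[RHS]natz natr_sum addKn; apply: eq_bigr => i _.
  by rewrite binzE /F PoszM natz.
have V : (\sum_(2 <= i < l.+2) F i + 'C(m, k) + l.+1 * 'C(m, k.-1) = 'C(l.+1 + m, k))%N.
  rewrite -binomial.Vandermonde.
  rewrite -(big_mkord xpredT (fun j => 'C(l.+1, j) * 'C(m, k - j))%N).
  have -> : (\sum_(0 <= j < k.+1) 'C(l.+1, j) * 'C(m, k - j) = \sum_(0 <= j < k.+1) F j)%N.
    apply: eq_big_nat => i /andP[_ hi]; rewrite /F.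
    rewrite (_ : (i <= k)%N = true) ?mul1n //; lia.
  rewrite (sum_ext0 k.+1 (k + l).+2 F); last 2 first.
  - lia.
  - move=> i /andP[h1 _]; rewrite /F (_ : (i <= k)%N = false) ?mul0n ?muln0 //; lia.
  rewrite -(sum_ext0 l.+2 (k + l).+2 F); last 2 first.
  - lia.
  - by move=> i /andP[h1 _]; rewrite /F bin_small ?mul0n //; lia.
  rewrite (@big_ltn _ _ _ 0 l.+2 F) // (@big_ltn _ _ _ 1 l.+2 F) // /F bin0 bin1 subn0 subn1.
  have -> : (0 <= k)%N by [].
  have -> : (1 <= k)%N by lia.
  lia.
have P : 'C(l.+1 + m - l, k) = ('C(m, k) + 'C(m, k.-1))%N.
  have -> : (l.+1 + m - l = m.+1)%N by lia.
  case: k hk {hlk hn V F Eg hm} => // k' _; by rewrite binS.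
have E2 : (l.+1 + m - 2 * l = m - (l.-1))%N by lia.
have H : ('C(m, k) <= 'C(m - l.-1, k) + l.-1 * 'C(m.-1, k.-1))%N.
  case: m hm {Eg V P E2 hn F} => [|m'] hm; first lia.
  case: k hk hlk hm => // k' _ hlk hm /=.
  have := hock m' k' l.-1.
  apply; lia.
have Q : 'C(m, k.-1) = ('C(m.-1, k.-1) + 'C(m.-1, k.-2))%N.
  case: m hm {Eg V P E2 H hn F} => [|m'] hm; first lia.
  case: k hk hlk hm => // [[|k']] //= _ hlk hm; by rewrite binS.
have Q2 : (2 <= 'C(m.-1, k.-2))%N by apply: bin_ge2; lia.
rewrite Eg /h_fun E2 P -V.
have L1 : (l.-1 * 'C(m, k.-1) = l.-1 * 'C(m.-1, k.-1) + l.-1 * 'C(m.-1, k.-2))%N by rewrite Q mulnDr.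
have L2 : (2 * l.-1 <= l.-1 * 'C(m.-1, k.-2))%N by rewrite mulnC leq_mul2l Q2 orbT.
have L3 : (l.+1 * 'C(m, k.-1) = l.-1 * 'C(m, k.-1) + 2 * 'C(m, k.-1))%N.
  by rewrite -mulnDl; congr (_ * _)%N; lia.
lia.
Qed.
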